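(* For positive integers $x_1,\ldots,x_r$, the complete $r$-partite graph $K_{x_1,x_2,\ldots,x_r}$ satisfies $$\rho(K_{x_1,x_2,\ldots,x_r})=\sum_{i=1}^r \frac{x_i(x_i + 1)}{2}.$$
   Context: All graphs are finite and simple. $K_{x_1,\ldots,x_r}$ is the complete $r$-partite graph with parts of sizes $x_1,\ldots,x_r$. A coloring means a proper vertex coloring; an induced subgraph is rainbow if all its vertices have pairwise different colors. For a graph $H$, $\rho(H)$ is the least number $m$ such that there exists a graph $G$ on $m$ vertices such that every proper vertex coloring of $G$ contains a rainbow induced subgraph isomorphic to $H$. *)

(* Defs.v *)
From mathcomp Require Import all_boot.
Set Implicit Arguments. Unset Strict Implicit. Unset Printing Implicit Defensive.

Definition simple_graph (T : finType) (e : rel T) : Prop :=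
  symmetric e /\ irreflexive e.

Definition proper_coloring (T : finType) (e : rel T) (c : T -> nat) : Prop :=
  forall u v, e u v -> c u != c v.

Definition induced_embedding (H : finType) (eH : rel H) (T : finType) (e : rel T)
  (f : H -> T) : Prop :=
  injective f /\ forall u v, e (f u) (f v) = eH u v.

Definition rainbow (H T : finType) (c : T -> nat) (f : H -> T) : Prop :=
  injective (fun v => c (f v)).

Definition rainbow_forcing (H : finType) (eH : rel H) (m : nat) : Prop :=
  exists e : rel 'I_m, simple_graph e /\
    forall c : 'I_m -> nat, proper_coloring e c ->
      exists f : H -> 'I_m, induced_embedding eH e f /\ rainbow c f.

Definition is_rho (H : finType) (eH : rel H) (m : nat) : Prop :=
  rainbow_forcing eH m /\ forall m', m' < m -> ~ rainbow_forcing eH m'.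

(* Complete r-partite graph K_{x_1,...,x_r}: vertices are pairs (i, j) with
   j < x i; two vertices are adjacent iff they lie in different parts. *)
Definition cmp_vertex (r : nat) (x : 'I_r -> nat) : finType :=
  {i : 'I_r & 'I_(x i)}.

Definition cmp_rel (r : nat) (x : 'I_r -> nat) : rel (cmp_vertex x) :=
  fun u v => tag u != tag v.

(* Main.v *)
Require Import Defs.
From mathcomp Require Import all_boot.
From mathcomp Require Import zify.
Set Implicit Arguments. Unset Strict Implicit. Unset Printing Implicit Defensive.

Lemma sum_sig (I : finType) (T_ : I -> finType) (F : {i : I & T_ i} -> nat) :
  \sum_(u : {i : I & T_ i}) F u = \sum_(i : I) \sum_(j : T_ i) F (Tagged T_ j).
Proof.
rewrite (partition_big (@tag I T_) predT) //=.
apply: eq_bigr => i _.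
rewrite (big_tag (fun i j => F (Tagged T_ j)) i).
apply: eq_bigr => u /eqP e.
by rewrite (untagE _ _ e) etaggedK.
Qed.


Section Lower.
Variables (V : finType) (e : rel V).
Hypothesis esym : symmetric e.
Hypothesis eirr : irreflexive e.

Definition indep (S : {set V}) := [forall u in S, forall v in S, ~~ e u v].

Definition Dw (W : {set V}) (p : V -> nat) :=
  \sum_(w in W) (\sum_(w' in W) (p w' == p w) + 1).

Lemma sum_ind_card (W : {set V}) (b : pred V) :
  \sum_(w in W) (b w : nat) = #|[set w in W | b w]|.
Proof.
rewrite -sum1_card [LHS]big_mkcond [RHS]big_mkcond /=.
by apply: eq_bigr => w _; rewrite inE; case: (w \in W); case: (b w).
Qed.

Lemma Dw_split (W : {set V}) p w0 : w0 \in W ->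
  Dw W p = Dw (W :\ w0) p + (#|[set w in W | p w == p w0]|).*2.
Proof.
move=> w0W; rewrite /Dw (big_setD1 w0 w0W) /=.
rewrite -sum_ind_card (big_setD1 w0 w0W) eqxx /=.
have -> : \sum_(w in W :\ w0) (\sum_(w' in W) (p w' == p w) + 1) =
   \sum_(w in W :\ w0) (p w0 == p w : nat) +
   \sum_(w in W :\ w0) (\sum_(w' in W :\ w0) (p w' == p w) + 1).
  rewrite -big_split /=; apply: eq_bigr => w _.
  by rewrite (big_setD1 w0 w0W) /= addnA.
under [\sum_(w in W :\ w0) (p w0 == p w : nat)]eq_bigr do rewrite eq_sym.
rewrite -addnn; lia.
Qed.


Lemma lower_main n (A : {set V}) : #|A| <= n ->
  exists c : V -> nat,
    (forall u v, u \in A -> v \in A -> e u v -> c u != c v) /\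
    forall (W : {set V}) (p : V -> nat), W \subset A -> {in W &, injective c} ->
      {in W &, forall u v, e u v = (p u != p v)} -> Dw W p <= (#|A|).*2.
Proof.
elim: n A => [|n IH] A hA.
  have A0 : A = set0 by apply/eqP; rewrite -cards_eq0; lia.
  exists (fun _ => 0); split; first by move=> u v; rewrite A0 inE.
  move=> W p; rewrite A0 subset0 => /eqP -> _ _.
  by rewrite /Dw big_set0.
have i0 : (set0 \subset A) && indep set0.
  by rewrite sub0set; apply/forall_inP => u; rewrite inE.
case: (@arg_maxnP _ set0 (fun S : {set V} => (S \subset A) && indep S) (fun S => #|S|) i0).
move=> I /andP [IA Iind] Imax.
have Ile : #|I| <= #|A| by apply: subset_leq_card.
have hA' : #|A :\: I| <= n.
  rewrite cardsD (setIidPr IA).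
  case: (set_0Vmem A) => [A0|[a aA]]; first by rewrite A0 cards0.
  have : #|[set a]| <= #|I|.
    apply: Imax; rewrite sub1set aA /=.
    by apply/forall_inP => u /set1P ->; apply/forall_inP => v /set1P ->; rewrite eirr.
  rewrite cards1; lia.
have [c' [c'prop c'bd]] := IH _ hA'.
exists (fun v => if v \in I then 0 else (c' v).+1); split.
  move=> u v uA vA euv.
  case uI: (u \in I); case vI: (v \in I) => //.
  - by move/forall_inP: Iind => /(_ u uI) /forall_inP /(_ v vI); rewrite euv.
  - rewrite eqSS; apply: c'prop => //; rewrite inE ?uI ?vI //.
move=> W p WA cinj Wcfg.
case: (set_0Vmem W) => [->|[w1 w1W]]; first by rewrite /Dw big_set0.
have [w0 [w0W w0I]] : exists w0, w0 \in W /\ forall w, w \in W -> w \in I -> w = w0.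
  case: (pickP [pred w | (w \in W) && (w \in I)]) => [w0 /andP [w0W w0I]|none].
    exists w0; split => // w wW wI; apply: cinj => //.
    by rewrite wI w0I.
  exists w1; split => // w wW wI.
  by move: (none w) => /=; rewrite wW wI.
set W' := W :\ w0.
have W'A : W' \subset A :\: I.
  apply/subsetP => w; rewrite !inE => /andP [wn0 wW].
  rewrite (subsetP WA _ wW) andbT; apply/negP => wI.
  by move: wn0; rewrite (w0I w wW wI) eqxx.
have W'inj : {in W' &, injective c'}.
  move=> u v uW vW cuv.
  have uI : u \notin I by move: (subsetP W'A u uW); rewrite inE => /andP [].
  have vI : v \notin I by move: (subsetP W'A v vW); rewrite inE => /andP [].
  apply: cinj; first by move: uW; rewrite inE => /andP [].
    by move: vW; rewrite inE => /andP [].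
  by rewrite (negbTE uI) (negbTE vI) cuv.
have W'cfg : {in W' &, forall u v, e u v = (p u != p v)}.
  move=> u v uW vW; apply: Wcfg.
    by move: uW; rewrite inE => /andP [].
  by move: vW; rewrite inE => /andP [].
have := c'bd W' p W'A W'inj W'cfg.
rewrite (Dw_split p w0W) -/W'.
set P := [set w in W | p w == p w0].
have : #|P| <= #|I|.
  apply: Imax; apply/andP; split.
    by apply/subsetP => w; rewrite inE => /andP [wW _]; apply: (subsetP WA).
  apply/forall_inP => u; rewrite inE => /andP [uW /eqP pu].
  apply/forall_inP => v; rewrite inE => /andP [vW /eqP pv].
  by rewrite Wcfg // pu pv eqxx.
rewrite cardsD (setIidPr IA) => hP hD.
rewrite -!addnn in hD *; lia.
Qed.

End Lower.


Lemma sum_tag_count r (x : 'I_r -> nat) (i : 'I_r) :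
  \sum_(u : cmp_vertex x) (tag u == i : nat) = x i.
Proof.
rewrite /cmp_vertex sum_sig /=.
under eq_bigr do rewrite sum_nat_const card_ord.
rewrite (bigD1 i) //= eqxx muln1 big1 ?addn0 // => j /negbTE ->.
by rewrite muln0.
Qed.

Lemma Dw_image r (x : 'I_r -> nat) m' (e : rel 'I_m') (f : cmp_vertex x -> 'I_m')
  (finj : injective f) p :
  (forall u, p (f u) = val (tag u)) ->
  Dw (f @: setT) p = \sum_(i < r) x i * (x i).+1.
Proof.
move=> pf.
have finj' : {in [set: cmp_vertex x] &, injective f} by move=> ? ? _ _; apply: finj.
rewrite /Dw big_imset //=.
under eq_bigr do rewrite big_imset //=.
rewrite (eq_bigl predT); last by move=> u; rewrite inE.
under eq_bigr => u _.
  rewrite (eq_bigl predT); last by move=> v; rewrite inE.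
  under eq_bigr do rewrite !pf val_eqE.
  rewrite sum_tag_count.
  over.
rewrite /cmp_vertex sum_sig /=.
apply: eq_bigr => i _.
by rewrite sum_nat_const card_ord addn1.
Qed.

Lemma no_forcing r (x : 'I_r -> nat) m' :
  m'.*2 < \sum_(i < r) x i * (x i).+1 -> ~ rainbow_forcing (@cmp_rel r x) m'.
Proof.
move=> hlt [e [[esym eirr] Hc]].
have hA : #|[set: 'I_m']| <= m' by rewrite cardsT card_ord.
have [c [cprop cbd]] := lower_main eirr hA.
have [f [[finj femb] frain]] : exists f : cmp_vertex x -> 'I_m',
    induced_embedding (@cmp_rel r x) e f /\ rainbow c f.
  by apply: Hc => u v euv; apply: cprop; rewrite ?inE.
pose p v := if [pick u | f u == v] is Some u then val (tag u) else 0.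
have pf : forall u, p (f u) = val (tag u).
  move=> u; rewrite /p; case: pickP => [u' /eqP /finj -> //|/(_ u)].
  by rewrite eqxx.
have Hi : {in f @: setT &, injective c}.
  move=> a b /imsetP [u _ ->] /imsetP [v _ ->] cuv.
  by rewrite (frain u v cuv).
have Hcf : {in f @: setT &, forall a b, e a b = (p a != p b)}.
  move=> a b /imsetP [u _ ->] /imsetP [v _ ->].
  by rewrite femb !pf /cmp_rel val_eqE.
have := cbd (f @: setT) p (subsetT _) Hi Hcf.
by rewrite Dw_image // cardsT card_ord leqNgt hlt.
Qed.


Lemma transport (H V : finType) (eH : rel H) (eV : rel V) :
  simple_graph eV ->
  (forall c : V -> nat, proper_coloring eV c ->
     exists f : H -> V, induced_embedding eH eV f /\ rainbow c f) ->
  rainbow_forcing eH #|V|.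
Proof.
move=> [esym eirr] Hc.
pose h : 'I_#|V| -> V := enum_val.
pose g : V -> 'I_#|V| := enum_rank.
have hg : cancel g h by move=> v; rewrite /g /h enum_rankK.
have gh : cancel h g by move=> v; rewrite /g /h enum_valK.
exists (fun a b => eV (h a) (h b)); split.
  by split => [a b|a]; [apply: esym | apply: eirr].
move=> c cprop.
have [f [[finj femb] frain]] : exists f : H -> V, induced_embedding eH eV f /\ rainbow (fun v => c (g v)) f.
  apply: Hc => u v euv; apply: cprop; by rewrite !hg.
exists (fun u => g (f u)); split; first split.
- by move=> u v /(can_inj hg) /finj.
- by move=> u v; rewrite !hg femb.
- by move=> u v /frain.
Qed.

Lemma sum_succ n : \sum_(j < n) (j : nat).+1 = (n * n.+1) %/ 2.
Proof.
have : (\sum_(j < n) (j : nat).+1).*2 = n * n.+1.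
  elim: n => [|n IH]; first by rewrite big_ord0.
  rewrite big_ord_recr /= doubleD IH; lia.
by move=> <-; rewrite divn2 doubleK.
Qed.


Section Upper.
Variables (r : nat) (x : 'I_r -> nat).

Definition HV := cmp_vertex x.
Definition T_ (u : HV) := 'I_(val (tagged u)).+1.
Definition GV : finType := {u : HV & T_ u}.
Definition eG : rel GV := fun a b =>
  (tag (tag a) != tag (tag b)) || ((tag a == tag b) && (val (tagged a) != val (tagged b))).

Lemma eG_simple : simple_graph eG.
Proof.
split => [a b|a]; rewrite /eG; last by rewrite !eqxx.
by rewrite eq_sym [tag b == _]eq_sym [val (tagged b) == _]eq_sym.
Qed.

Lemma HV_eq (u v : HV) : tag u = tag v -> val (tagged u) = val (tagged v) -> u = v.
Proof.
case: u => i a; case: v => j b /= eij; subst j => eab.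
by rewrite (val_inj eab).
Qed.

Definition wv (u : HV) (j : 'I_(val (tagged u))) : HV :=
  Tagged (fun i => 'I_(x i)) (widen_ord (ltnW (ltn_ord (tagged u))) j).

Lemma greedy (c : GV -> nat) : proper_coloring eG c -> forall n,
  exists k : forall u : HV, T_ u, forall u v : HV, tag u = tag v ->
    val (tagged u) < n -> val (tagged v) < n ->
    c (Tagged T_ (k u)) = c (Tagged T_ (k v)) -> u = v.
Proof.
move=> cprop; elim=> [|n [k IH]].
  by exists (fun u => ord0).
pose fb (u : HV) := [seq c (Tagged T_ (k (@wv u j))) | j <- enum 'I_(val (tagged u))].
have ex : forall u : HV, exists kk : T_ u, c (Tagged T_ kk) \notin fb u.
  move=> u; case: (boolP [exists kk : T_ u, c (Tagged T_ kk) \notin fb u]) => [/existsP //|].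
  rewrite negb_exists => /forallP /= hall; exfalso.
  have : size [seq c (Tagged T_ kk) | kk <- enum (T_ u)] <= size (fb u).
    apply: uniq_leq_size.
      rewrite map_inj_in_uniq ?enum_uniq // => kk kk' _ _ ckk.
      apply/eqP; apply/negP => /negP nkk.
      have : eG (Tagged T_ kk) (Tagged T_ kk') by rewrite /eG /= !eqxx /=; exact: nkk.
      by move/cprop; rewrite ckk eqxx.
    by move=> y /mapP [kk _ ->]; move: (hall kk); rewrite negbK.
  by rewrite !size_map /T_ -!enumT !size_enum_ord ltnn.
have [kk hkk] := fin_all_exists ex.
pose k2 (u : HV) : T_ u := if val (tagged u) < n then k u else kk u.
have key : forall u v : HV, tag u = tag v -> val (tagged u) = n -> val (tagged v) < n ->
    c (Tagged T_ (k2 u)) != c (Tagged T_ (k2 v)).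
  move=> u v tuv hu hv; rewrite /k2 hu ltnn hv.
  apply/negP => /eqP ceq; move: (hkk u); rewrite ceq.
  have hb : val (tagged v) < val (tagged u) by rewrite hu.
  have Ev : v = wv (Ordinal hb) by apply: HV_eq.
  apply/negP; rewrite negbK; apply/mapP; exists (Ordinal hb); first by rewrite mem_enum.
  by rewrite -Ev.
exists k2 => u v tuv hu hv ceq.
have [hu'|hu'] : val (tagged u) = n \/ val (tagged u) < n by lia.
  have [hv'|hv'] : val (tagged v) = n \/ val (tagged v) < n by lia.
    by apply: HV_eq; rewrite // hu' hv'.
  by move: (key u v tuv hu' hv'); rewrite ceq eqxx.
have [hv'|hv'] : val (tagged v) = n \/ val (tagged v) < n by lia.
  by move: (key v u (esym tuv) hv' hu'); rewrite ceq eqxx.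
apply: IH => //; move: ceq; rewrite /k2 hu' hv' //.
Qed.


Lemma GV_forcing (c : GV -> nat) : proper_coloring eG c ->
  exists f : HV -> GV, induced_embedding (@cmp_rel r x) eG f /\ rainbow c f.
Proof.
move=> cprop; have [k hk] := greedy cprop (\sum_(i < r) x i).
have bnd : forall u : HV, val (tagged u) < \sum_(i < r) x i.
  move=> u; apply: (leq_trans (ltn_ord (tagged u))).
  by rewrite (bigD1 (tag u)) //= leq_addr.
exists (fun u => Tagged T_ (k u)); split; first split.
- by move=> u v /(congr1 tag).
- move=> u v; rewrite /eG /cmp_rel /=.
  case: (eqVneq u v) => [->|nuv]; first by rewrite !eqxx.
  by rewrite andFb orbF.
- move=> u v cuv; case: (eqVneq (tag u) (tag v)) => [tuv|ntuv].
    exact: hk tuv (bnd u) (bnd v) cuv.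
  have : eG (Tagged T_ (k u)) (Tagged T_ (k v)) by rewrite /eG /= ntuv.
  by move/cprop; rewrite cuv eqxx.
Qed.

Lemma card_GV : #|GV| = \sum_(i < r) (x i * (x i).+1) %/ 2.
Proof.
rewrite -sum1_card /GV sum_sig.
under eq_bigr do rewrite sum1_card card_ord.
rewrite /HV /cmp_vertex sum_sig /=.
by apply: eq_bigr => i _; rewrite sum_succ.
Qed.

End Upper.

Lemma half_prod n : 2 * ((n * n.+1) %/ 2) = n * n.+1.
Proof.
rewrite mulnC divnK // dvdn2 oddM oddS.
by case: (odd n).
Qed.

Unset Implicit Arguments.
Set Strict Implicit.

Theorem corollary2p3 (r : nat) (x : 'I_r -> nat) (xpos : forall i, 0 < x i) :
  is_rho (@cmp_rel r x) (\sum_(i < r) (x i * (x i).+1) %/ 2).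
Proof.
split.
  rewrite -card_GV; apply: transport; first exact: eG_simple.
  exact: GV_forcing.
move=> m' hm; apply: no_forcing.
have -> : \sum_(i < r) x i * (x i).+1 = 2 * \sum_(i < r) (x i * (x i).+1) %/ 2.
  by rewrite big_distrr /=; apply: eq_bigr => i _; rewrite half_prod.
by rewrite -mul2n ltn_mul2l.
Qed.
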